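(* Let $G=(V,E)$ be a connected, locally finite, nonamenable, transitive graph in which every vertex has degree $d\ge3$. Let $S\subset V$ be nonempty and finite, $p\in(0,1]$, $\mu\in(0,1/2]$, and let $\bm\eta=(\eta_t)_{t\in[0,\mu^{-1}]}$ be an environment path such that, for some $\beta>0$, $$\big|\{e\in\partial_E S:\eta_t(e)=1\text{ for all }t\in[\mu^{-1}-1,\mu^{-1}]\}\big|\ge\beta\,|\partial_E S| .$$ Then $$\Phi^{\bm\eta}_S:=\frac1{|S|}\sum_{x\in S}\sum_{y\in V\setminus S}\mathbb P^{\bm\eta}\big(X_{\mu^{-1}}=y\mid X_0=x\big)\;\ge\;\frac{\beta}{de}\,\Phi(G).$$
   Context: Random walk on dynamical percolation: given $p\in(0,1]$ and $\mu>0$, each edge carries an independent rate-$\mu$ Poisson process of refresh times, at which its state is resampled to open with probability $p$ and closed with probability $1-p$; $\eta_t\in\{0,1\}^E$ is the environment at time $t$. The walker $X_t$ attempts jumps at the times of an independent rate-$1$ Poisson process, choosing a uniformly random neighbor and jumping iff the connecting edge is open at that time. $\mathbb P^{\bm\eta}$ denotes the law of the walk conditionally on the environment path $\bm\eta$. $\partial_E S$ is the set of edges with exactly one endpoint in $S$. Cheeger constant: $\Phi(G):=\inf\{|\partial_E W|/\sum_{v\in W}\deg(v): W\subset V\text{ finite, nonempty}\}$; nonamenable means $\Phi(G)>0$. *)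

(* Defs.v *)
From HB Require Import structures.
From mathcomp Require Import all_boot all_order all_algebra.
From mathcomp Require Import finmap.
From mathcomp Require Import all_classical all_reals all_analysis.
Set Implicit Arguments. Unset Strict Implicit. Unset Printing Implicit Defensive.
Import Order.TTheory GRing.Theory Num.Theory.
Local Open Scope classical_set_scope.
Local Open Scope ring_scope.
Local Open Scope fset_scope.

(* A locally finite graph on vertex type V is given by its adjacency lists
   nb : V -> seq V (the neighbours of x are the elements of nb x). *)
Definition simple_graph (V : eqType) (nb : V -> seq V) : Prop :=
  (forall x, uniq (nb x)) /\
  (forall x, x \notin nb x) /\
  (forall x y, (y \in nb x) = (x \in nb y)).

Definition connected_graph (V : eqType) (nb : V -> seq V) : Prop :=
  forall u v, exists p : seq V, path (fun a b => b \in nb a) u p /\ last u p = v.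

Definition transitive_graph (V : eqType) (nb : V -> seq V) : Prop :=
  forall u v, exists f g : V -> V,
    [/\ cancel f g, cancel g f,
        (forall a b, (b \in nb a) = (f b \in nb (f a))) & f u = v].

Definition regular_graph (V : eqType) (nb : V -> seq V) (d : nat) : Prop :=
  forall x, size (nb x) = d.

(* |partial_E W| : edges with exactly one endpoint in W, each counted once
   as the pair (x in W, y notin W) *)
Definition edge_bd (V : choiceType) (nb : V -> seq V) (W : {fset V}) : nat :=
  \sum_(x <- W) count (fun y => y \notin W) (nb x).

Definition vol (V : choiceType) (nb : V -> seq V) (W : {fset V}) : nat :=
  \sum_(x <- W) size (nb x).

Definition cheeger (R : realType) (V : choiceType) (nb : V -> seq V) : R :=
  inf [set r : R | exists W : {fset V},
        W != fset0 /\ r = (edge_bd nb W)%:R / (vol nb W)%:R].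

(* Environment path: eta t x y = state of the edge {x,y} at time t. *)

(* One-step kernel of the walk at a clock ring at time t: pick a uniform
   neighbour z of x, jump iff the edge {x,z} is open at time t. *)
Definition ring_kernel (R : realType) (V : eqType) (nb : V -> seq V)
    (eta : R -> V -> V -> bool) (t : R) (x z : V) : R :=
  (if (z \in nb x) && eta t x z then (size (nb x))%:R^-1 else 0) +
  (if z == x then 1 - (count (eta t x) (nb x))%:R / (size (nb x))%:R else 0).

(* walk_term T n s x y = P^eta(X_T = y, exactly n clock rings in (s,T] | X_s = x),
   for the rate-1 Poisson clock:
     n = 0 : e^{-(T-s)} 1_{x=y}
     n+1 : int_s^T e^{-(t-s)} sum_z K_t(x,z) walk_term T n t z y dt  *)
Fixpoint walk_term (R : realType) (V : eqType) (nb : V -> seq V)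
    (eta : R -> V -> V -> bool) (T : R) (n : nat) (s : R) (x y : V) : \bar R :=
  match n with
  | 0 => (expR (- (T - s)) * (x == y)%:R)%:E
  | n'.+1 =>
      (\int[@lebesgue_measure R]_(t in `[s, T])
         ((expR (- (t - s)))%:E *
          \sum_(z <- x :: nb x) ((ring_kernel nb eta t x z)%:E *
                                  walk_term nb eta T n' t z y)))%E
  end.

Definition trans_prob (R : realType) (V : eqType) (nb : V -> seq V)
    (eta : R -> V -> V -> bool) (T : R) (x y : V) : \bar R :=
  (\sum_(n <oo) walk_term nb eta T n 0 x y)%E.

Definition Phi_eta (R : realType) (V : choiceType) (nb : V -> seq V)
    (eta : R -> V -> V -> bool) (T : R) (S : {fset V}) : \bar R :=
  ((#|` S|%:R^-1 : R)%:E *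
   \sum_(x <- S) \esum_(y in [set y : V | y \notin S]) trans_prob nb eta T x y)%E.

Definition open_bd (R : realType) (V : choiceType) (nb : V -> seq V)
    (eta : R -> V -> V -> bool) (T : R) (S : {fset V}) : nat :=
  \sum_(x <- S) count (fun y => (y \notin S) &&
                       `[< forall t : R, (T - 1 <= t <= T)%R -> eta t x y >]) (nb x).

(* Main.v *)
Require Import Defs.
From HB Require Import structures.
From mathcomp Require Import all_boot all_order all_algebra.
From mathcomp Require Import finmap.
From mathcomp Require Import all_classical all_reals all_analysis.
From mathcomp Require Import ring lra.
From mathcomp Require Import measurable_realfun.
Import Order.TTheory GRing.Theory Num.Theory.
Set Implicit Arguments. Unset Strict Implicit. Unset Printing Implicit Defensive.
Local Open Scope classical_set_scope.
Local Open Scope ring_scope.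

Section ListSums.
Context {M : Type} {idx : M} (op : Monoid.com_law idx) {V : eqType}.

Lemma big_sub_eq (U L : seq V) (g : V -> M) :
  uniq U -> uniq L -> {subset L <= U} ->
  (forall x, x \in U -> x \notin L -> g x = idx) ->
  \big[op/idx]_(x <- U) g x = \big[op/idx]_(x <- L) g x.
Proof.
elim: L U => [|l L IH] U uU uL LU g0.
  by rewrite big_nil big_seq big1 // => x xU; apply: g0.
have lU : l \in U by apply: LU; rewrite inE eqxx.
rewrite (big_rem l lU) big_cons; congr (op _ _).
move: uL => /= /andP[lL uL].
apply: IH => //; first exact: rem_uniq.
  move=> x xL; have xl : x != l by apply: contraNneq lL => <-.
  by rewrite (mem_rem_uniq _ uU) inE xl /=; apply: LU; rewrite inE xL orbT.
move=> x; rewrite mem_rem_uniq // inE => /andP[xl xU] xL.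
by apply: g0 => //; rewrite inE negb_or xl.
Qed.
End ListSums.

Lemma sum_sub_le {R : numDomainType} {V : eqType} (U L : seq V) (f : V -> R) :
  uniq U -> uniq L -> (forall x, x \in L -> 0 <= f x) ->
  (forall x, x \in U -> x \notin L -> f x = 0) ->
  \sum_(x <- U) f x <= \sum_(x <- L) f x.
Proof.
elim: U L => [|u U IH] L uU uL f0 fz.
  by rewrite big_nil big_seq sumr_ge0.
move: uU => /= /andP[uU' uU].
rewrite big_cons; have [uL'|uL'] := boolP (u \in L).
  rewrite (big_rem u uL') lerD2l; apply: IH => //.
  - exact: rem_uniq.
  - by move=> x; rewrite (mem_rem_uniq _ uL) inE => /andP[_]; apply: f0.
  - move=> x xU; rewrite (mem_rem_uniq _ uL) inE negb_and negbK.
    have xu : x != u by apply: contraNneq uU' => <-.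
    by rewrite (negbTE xu) /= => xL; apply: fz => //; rewrite inE xU orbT.
rewrite fz ?inE ?eqxx // add0r; apply: IH => // x xU xL.
by apply: fz => //; rewrite inE xU orbT.
Qed.

Lemma sum_if_cst (R : numDomainType) (T : Type) (s : seq T) (P : pred T) (c : R) :
  \sum_(z <- s) (if P z then c else 0) = (count P s)%:R * c.
Proof. by rewrite -big_mkcond /= -sum1_count natr_sum mulr_suml; apply: eq_bigr => i _; rewrite mul1r. Qed.

Section Kernel.
Context (R : realType) (V : choiceType) (nb : V -> seq V) (d : nat)
  (eta : R -> V -> V -> bool).
Context (Hs : simple_graph nb) (Hreg : regular_graph nb d) (d0 : (0 < d)%N)
  (Heta : forall t x y, eta t x y = eta t y x)
  (Hm : forall x y, measurable [set t : R | eta t x y]).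

Local Notation K := (ring_kernel nb eta).

Lemma uniq_xnb x : uniq (x :: nb x).
Proof. by case: Hs => u [irr _] /=; rewrite irr u. Qed.

Lemma count_le_d t x : (count (eta t x) (nb x) <= d)%N.
Proof. by rewrite -(Hreg x) count_size. Qed.

Lemma K_ge0 t x z : 0 <= K t x z.
Proof.
rewrite /ring_kernel Hreg; apply: addr_ge0; case: ifP => // _.
rewrite subr_ge0 ler_pdivrMr ?ltr0n // mul1r ler_nat; exact: count_le_d.
Qed.

Lemma K_out t x z : z \notin x :: nb x -> K t x z = 0.
Proof.
rewrite inE negb_or => /andP[zx zn].
by rewrite /ring_kernel (negbTE zn) (negbTE zx) /= addr0.
Qed.

Lemma K_sum t x : \sum_(z <- x :: nb x) K t x z = 1.
Proof.
case: Hs => u [irr sy].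
rewrite big_cons /ring_kernel (negbTE (irr x)) /= eqxx add0r.
rewrite (eq_big_seq (fun z => if eta t x z then (size (nb x))%:R^-1 else 0)); last first.
  move=> z zn; have -> : (z == x) = false.
    by apply/negbTE; apply: contraNneq (irr x) => zx; rewrite -{1}zx.
  by rewrite zn /= addr0.
rewrite sum_if_cst Hreg; field.
by rewrite pnatr_eq0 -lt0n.
Qed.

Lemma K_sym t x z : K t x z = K t z x.
Proof.
case: Hs => u [irr sy].
rewrite /ring_kernel !Hreg sy Heta; congr (_ + _).
by case: eqP => [->|]; rewrite ?eqxx // eq_sym => /eqP /negbTE ->.
Qed.

Lemma K_colsum t (U : seq V) z : uniq U -> \sum_(x <- U) K t x z <= 1.
Proof.
move=> uU; rewrite (eq_bigr (fun x => K t z x)); last by move=> x _; rewrite K_sym.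
rewrite -(K_sum t z); apply: sum_sub_le => //; first exact: uniq_xnb.
  by move=> x _; apply: K_ge0.
by move=> x _; apply: K_out.
Qed.

Lemma K_open t x y : y \in nb x -> eta t x y -> d%:R^-1 <= K t x y.
Proof.
move=> yn e; rewrite /ring_kernel yn e /= Hreg lerDl.
case: eqP => // _; rewrite subr_ge0 ler_pdivrMr ?ltr0n // mul1r ler_nat.
exact: count_le_d.
Qed.

Lemma measurable_bool_if (b : R -> bool) (c1 c2 : R) :
  measurable [set t | b t] -> measurable_fun setT (fun t => if b t then c1 else c2).
Proof.
move=> mb; apply: measurable_fun_ifT => //.
apply: (@measurable_fun_bool _ _ _ _ true).
by rewrite setTI; rewrite (_ : b @^-1` [set true] = [set t | b t]) //;
  apply/seteqP; split => t /=.
Qed.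

Lemma mK x z : measurable_fun setT (fun t => K t x z).
Proof.
rewrite /ring_kernel; apply: measurable_realfun.measurable_funD.
  case: (boolP (z \in nb x)) => zn /=; last exact: measurable_cst.
  exact: measurable_bool_if.
case: eqP => _; last exact: measurable_cst.
apply: measurable_realfun.measurable_funB; first exact: measurable_cst.
apply: measurable_realfun.measurable_funM; last exact: measurable_cst.
rewrite (_ : (fun t => _) = (fun t => \sum_(y <- nb x) (if eta t x y then 1 else 0) : R)).
  by apply: measurable_sum => y; apply: measurable_bool_if.
by apply/funext => t; rewrite sum_if_cst mulr1.
Qed.

End Kernel.

Lemma nonincr_emeasurable (R : realType) (f : R -> \bar R) :
  (forall s t, s <= t -> (f t <= f s)%E) -> measurable_fun [set: R] f.
Proof.
move=> fni mD; apply: (measurability _ (ErealGenOInfty.measurableE R)) => //.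
move=> _ [_ [x ->] <-]; apply: measurableI => //.
apply: is_interval_measurable => s t /=.
rewrite !in_itv/= !andbT => fs ft u /andP[su ut].
by rewrite in_itv /= andbT (lt_le_trans ft (fni _ _ ut)).
Qed.

Section Omega.
Context (R : realType) (V : choiceType) (nb : V -> seq V) (d : nat)
  (eta : R -> V -> V -> bool) (T : R).
Context (Hs : simple_graph nb) (Hreg : regular_graph nb d) (d0 : (0 < d)%N)
  (Heta : forall t x y, eta t x y = eta t y x)
  (Hm : forall x y, measurable [set t : R | eta t x y]).

Local Notation K := (ring_kernel nb eta).

Let Kge0 t x z : 0 <= K t x z. Proof. by apply: K_ge0. Qed.
Let mKR x z : measurable_fun setT (fun t => K t x z). Proof. by apply: mK. Qed.

Fixpoint om (n : nat) (s : R) (x y : V) : \bar R :=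
  match n with
  | 0 => ((x == y)%:R)%:E
  | n'.+1 => (\int[@lebesgue_measure R]_(t in `[s, T])
         \sum_(z <- x :: nb x) ((K t x z)%:E * om n' t z y))%E
  end.

Lemma om_ge0 n s x y : (0 <= om n s x y)%E.
Proof.
elim: n s x y => [|n IH] s x y /=; first by rewrite lee_fin.
apply: integral_ge0 => t _; apply: sume_ge0 => z _.
by apply: mule_ge0 => //; rewrite lee_fin Kge0.
Qed.

Lemma mKE x z : measurable_fun setT (fun t => (K t x z)%:E).
Proof. by apply/measurable_EFinP; exact: mKR. Qed.

Lemma om_meas n x y : measurable_fun setT (fun s => om n s x y).
Proof.
elim: n x y => [|n IH] x y /=; first exact: measurable_cst.
apply: nonincr_emeasurable => s s' ss'.
apply: ge0_subset_integral.
- exact: measurable_itv.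
- exact: measurable_itv.
- apply: measurable_funS (_ : measurable_fun setT _) => //.
  apply: emeasurable_sum => z; apply: emeasurable_funM; first exact: mKE.
  exact: IH.
- move=> t _; apply: sume_ge0 => z _.
  by apply: mule_ge0; [rewrite lee_fin Kge0|exact: om_ge0].
- by apply: subset_itvr; rewrite bnd_simp.
Qed.

Lemma walk_termE n s x y :
  walk_term nb eta T n s x y = ((expR (- (T - s)))%:E * om n s x y)%E.
Proof.
elim: n s x y => [|n IH] s x y /=; first by rewrite EFinM.
rewrite -ge0_integralZl_EFin //.
2: move=> t _; apply: sume_ge0 => z _.
2: by apply: mule_ge0; [rewrite lee_fin Kge0|exact: om_ge0].
2: apply: measurable_funS (_ : measurable_fun setT _) => //.
2: apply: emeasurable_sum => z; apply: emeasurable_funM; first exact: mKE.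
2: exact: om_meas.
all: try exact: expR_ge0.
apply: eq_integral => t _.
under eq_bigr do rewrite IH.
rewrite (_ : (expR (- (T - s)))%:E = (expR (- (t - s)))%:E * (expR (- (T - t)))%:E)%E; last first.
  by rewrite -EFinM -expRD; congr (_%:E); congr expR; ring.
rewrite -muleA; congr (_ * _)%E.
rewrite ge0_sume_distrr; last first.
  by move=> z _; apply: mule_ge0; [rewrite lee_fin Kge0|exact: om_ge0].
apply: eq_bigr => z _; rewrite muleCA; congr (_ * _)%E; exact: muleC.
Qed.

End Omega.

Section Poly.
Context (R : realType).

Definition Pn (n : nat) (u : R) := \sum_(j < n) u ^+ j / (j`!)%:R.

Definition qp (a : R) (j : nat) : {poly R} := (j`!%:R)^-1 *: (a%:P - 'X) ^+ j.

Lemma qpE a j t : (qp a j).[t] = (a - t) ^+ j / (j`!)%:R.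
Proof. by rewrite /qp hornerZ horner_exp !hornerE mulrC. Qed.

Lemma qp_deriv a j : (qp a j.+1)^`() = - qp a j.
Proof.
rewrite /qp derivZ deriv_exp derivB derivC derivX sub0r /=.
rewrite mulNr mul1r mulNrn scalerN; congr (- _).
rewrite -scalerMnr scalerMnl; congr (_ *: _).
by rewrite factS natrM invfM -mulr_natr mulrAC mulVf ?pnatr_eq0 // mul1r.
Qed.

Lemma int_Pn n s a : s < a ->
  (\int[@lebesgue_measure R]_(t in `[s, a]) (Pn n (a - t))%:E =
   (\sum_(j < n) (a - s) ^+ j.+1 / (j.+1`!)%:R)%:E)%E.
Proof.
move=> sa.
pose p : {poly R} := \sum_(j < n) qp a j.
pose F : {poly R} := - \sum_(j < n) qp a j.+1.
have pE t : p.[t] = Pn n (a - t).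
  by rewrite /p horner_sum; apply: eq_bigr => j _; rewrite qpE.
have FE t : F.[t] = - \sum_(j < n) (a - t) ^+ j.+1 / (j.+1`!)%:R.
  by rewrite /F hornerN horner_sum; congr (- _); apply: eq_bigr => j _; rewrite qpE.
have dF : F^`() = p.
  by rewrite /F derivN raddf_sum -sumrN; apply: eq_bigr => j _; rewrite [X in - X]qp_deriv opprK.
under eq_integral => t _ do rewrite -pE.
rewrite (continuous_FTC2 (F := horner F)) //.
- rewrite !FE subrr (eq_bigr (fun _ => 0)); last by move=> j _; rewrite expr0n /= mul0r.
  by rewrite big1 // oppr0 sub0e -EFinN opprK.
- by apply: derivable_within_continuous => x _; exact: derivable_horner.
- split.
  + by move=> x _; exact: derivable_horner.
  + by apply: cvg_at_right_filter; exact: continuous_horner.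
  + by apply: cvg_at_left_filter; exact: continuous_horner.
- by move=> x _; rewrite -derivE dF.
Qed.

Lemma Pn_meas n a c : measurable_fun setT (fun t : R => (c * Pn n (a - t))%:E).
Proof.
apply/measurable_EFinP; apply: measurable_funM; first exact: measurable_cst.
apply: measurable_sum => j; apply: measurable_funM; last exact: measurable_cst.
apply: measurable_funX; apply: measurable_funB; first exact: measurable_cst.
exact: measurable_id.
Qed.

Lemma Pn_meas1 n a : measurable_fun setT (fun t : R => (Pn n (a - t))%:E).
Proof.
apply/measurable_EFinP.
apply: measurable_sum => j; apply: measurable_funM; last exact: measurable_cst.
apply: measurable_funX; apply: measurable_funB; first exact: measurable_cst.
exact: measurable_id.
Qed.

Lemma PnS n u : Pn n.+1 u = 1 + \sum_(j < n) u ^+ j.+1 / (j.+1`!)%:R.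
Proof. by rewrite /Pn big_ord_recl /= expr0 fact0 divr1. Qed.

Lemma Pn_ge0 n u : 0 <= u -> 0 <= Pn n u.
Proof. by move=> u0; apply: sumr_ge0 => j _; rewrite divr_ge0 // exprn_ge0. Qed.
End Poly.

Section Layers.
Context (V : choiceType) (nb : V -> seq V) (S : seq V).

Fixpoint Ur (r : nat) : seq V :=
  match r with
  | 0 => S
  | r'.+1 => undup (Ur r' ++ flatten [seq nb x | x <- Ur r'])
  end.

Lemma Ur_uniq r : uniq S -> uniq (Ur r).
Proof. by case: r => //= r _; exact: undup_uniq. Qed.

Lemma Ur_sub r : {subset Ur r <= Ur r.+1}.
Proof. by move=> x xr /=; rewrite mem_undup mem_cat xr. Qed.

Lemma Ur_mono r r' : (r <= r')%N -> {subset Ur r <= Ur r'}.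
Proof.
move=> /subnK <-; elim: (r' - r)%N => [|k IH] x xr //.
by rewrite addSn; apply: Ur_sub; apply: IH.
Qed.

Lemma Ur_xnb r x : x \in Ur r -> {subset x :: nb x <= Ur r.+1}.
Proof.
move=> xr z; rewrite inE => /orP[/eqP ->|zn]; first exact: Ur_sub.
rewrite /= mem_undup mem_cat; apply/orP; right.
by apply/flatten_mapP; exists x.
Qed.

End Layers.

Lemma sum_eq_ind (R : numDomainType) (V : eqType) (Y : seq V) x :
  uniq Y -> \sum_(y <- Y) ((x == y)%:R : R) = (x \in Y)%:R.
Proof.
move=> uY; rewrite (eq_bigr (fun y => if x == y then 1 else 0)); last first.
  by move=> y _; case: eqP.
rewrite sum_if_cst mulr1 (eq_count (a2 := pred1 x)); last by move=> y /=; rewrite eq_sym.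
by rewrite count_uniq_mem.
Qed.

Section Main.
Context (R : realType) (V : choiceType) (nb : V -> seq V) (d : nat)
  (eta : R -> V -> V -> bool) (T : R) (S : seq V).
Context (Hs : simple_graph nb) (Hreg : regular_graph nb d) (d0 : (0 < d)%N)
  (Heta : forall t x y, eta t x y = eta t y x)
  (Hm : forall x y, measurable [set t : R | eta t x y])
  (uS : uniq S) (N : nat).

Local Notation K := (ring_kernel nb eta).
Let Kge0 t x z : 0 <= K t x z. Proof. by apply: K_ge0. Qed.
Let Ksum t x : \sum_(z <- x :: nb x) K t x z = 1. Proof. by apply: K_sum. Qed.
Let Kout t x z : z \notin x :: nb x -> K t x z = 0. Proof. by apply: K_out. Qed.
Let Kcol t (L : seq V) z : uniq L -> \sum_(x <- L) K t x z <= 1.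
Proof. by move=> uL; apply: K_colsum. Qed.
Let Kopen t x y : y \in nb x -> eta t x y -> d%:R^-1 <= K t x y.
Proof. by move=> *; apply: K_open. Qed.
Let uxnb x : uniq (x :: nb x). Proof. by apply: uniq_xnb. Qed.

Let U := Ur nb S N.
Let Y := [seq y <- U | y \notin S].
Let uU : uniq U. Proof. exact: Ur_uniq. Qed.
Let uY : uniq Y. Proof. exact: filter_uniq. Qed.
Let SU : {subset S <= U}. Proof. by move=> x xS; apply: (@Ur_mono _ nb S 0 N). Qed.

Definition opn x y := `[< forall t : R, T - 1 <= t <= T -> eta t x y >].
Definition ox x := count (fun y => (y \notin S) && opn x y) (nb x).
Definition Aq k s (phi : V -> R) : \bar R :=
  (\sum_(x <- U) ((phi x)%:E * \sum_(y <- Y) om nb eta T k s x y))%E.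
Definition phiK t (phi : V -> R) z := \sum_(x <- U) phi x * K t x z.
Definition good r (phi : V -> R) :=
  [/\ forall x, 0 <= phi x <= 1, forall x, x \notin Ur nb S r -> phi x = 0
    & (size S)%:R <= \sum_(x <- U) phi x].

Lemma A0E s phi : Aq 0 s phi = (\sum_(x <- U) phi x * (x \notin S)%:R)%:E.
Proof.
rewrite /Aq -sumEFin big_seq_cond [RHS]big_seq_cond; apply: eq_bigr => x /andP[xU _].
rewrite sumEFin /= sum_eq_ind // mem_filter xU andbT -EFinM //.
Qed.

Lemma Aq_ge0 k s phi : (forall x, 0 <= phi x) -> (0 <= Aq k s phi)%E.
Proof.
move=> p0; apply: sume_ge0 => x _; apply: mule_ge0; first by rewrite lee_fin.
by apply: sume_ge0 => y _; exact: om_ge0.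
Qed.

Lemma phiK_ge0 t phi : (forall x, 0 <= phi x) -> forall z, 0 <= phiK t phi z.
Proof. by move=> p0 z; apply: sumr_ge0 => x _; apply: mulr_ge0. Qed.

Lemma phiK_good n t phi : (n < N)%N -> good (N - n.+1) phi -> good (N - n) (phiK t phi).
Proof.
move=> nN [p01 psupp psum]; have p0 x : 0 <= phi x by case/andP: (p01 x).
have eN : ((N - n.+1).+1 = N - n)%N by rewrite subnSK.
split.
- move=> z; rewrite phiK_ge0 //=; apply: le_trans (Kcol t z uU).
  apply: ler_sum => x _; rewrite -[leRHS]mul1r; apply: ler_wpM2r => //.
  by case/andP: (p01 x).
- move=> z zr; apply: big1_seq => x /andP[_ xU].
  have [xr|xr] := boolP (x \in Ur nb S (N - n.+1)); last by rewrite psupp // mul0r.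
  rewrite Kout ?mulr0 //; apply: contra zr => zx.
  by rewrite -eN; apply: (Ur_xnb xr).
- apply: le_trans psum _; rewrite le_eqVlt; apply/orP; left; apply/eqP.
  rewrite /phiK exchange_big /=; rewrite big_seq [RHS]big_seq; apply: eq_bigr => x xU.
  rewrite -mulr_sumr.
  have [xr|xr] := boolP (x \in Ur nb S (N - n.+1)); last by rewrite psupp // mul0r.
  rewrite (big_sub_eq _ (L := x :: nb x)) // ?Ksum ?mulr1 //.
    move=> z zx; apply: (@Ur_mono _ nb S (N - n) N); first exact: leq_subr.
    by rewrite -eN; apply: (Ur_xnb xr).
  by move=> z _ zx; apply: Kout.
Qed.

Lemma c1_le t phi : T - 1 <= t <= T -> (0 < N)%N -> (forall x, 0 <= phi x) ->
  \sum_(x <- S) phi x * (ox x)%:R / d%:R <=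
  \sum_(z <- U) phiK t phi z * (z \notin S)%:R.
Proof.
move=> tT N0 p0.
rewrite /phiK [leRHS](eq_bigr (fun z => \sum_(x <- U) phi x * (K t x z * (z \notin S)%:R)));
  last by move=> z _; rewrite mulr_suml; apply: eq_bigr => x _; rewrite mulrA.
rewrite exchange_big /=.
apply: le_trans (sum_sub_le (U := S) (L := U) _ _ _ _) => //; last 2 first.
- move=> x _; apply: sumr_ge0 => z _; apply: mulr_ge0 => //; apply: mulr_ge0 => //.
- by move=> x xS xU; move: (SU xS); rewrite (negbTE xU).
rewrite big_seq [leRHS]big_seq; apply: ler_sum => x xS.
rewrite -mulr_sumr -mulrA; apply: ler_wpM2l => //.
have xnbU : {subset x :: nb x <= U}.
  move=> z zx; apply: (@Ur_mono _ nb S 1 N) => //.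
  by apply: (@Ur_xnb _ nb S 0 x) => //.
rewrite (big_sub_eq _ (L := x :: nb x)) //; last by move=> z _ zx; rewrite Kout ?mul0r.
rewrite big_cons xS /= mulr0 add0r /ox -[X in X%:R * _]sum1_count natr_sum mulr_suml.
rewrite big_mkcond /= big_seq [leRHS]big_seq; apply: ler_sum => z zn.
case: ifP => [/andP[zS /asboolP zo]|_]; last by apply: mulr_ge0.
rewrite zS mulr1 mul1r; apply: Kopen => //; exact: zo.
Qed.

Lemma ox_le x : (ox x <= d)%N.
Proof. by rewrite /ox -(Hreg x) count_size. Qed.

Lemma deficit r phi : good r phi ->
  (\sum_(x <- S) ox x)%:R / d%:R <=
  \sum_(x <- U) phi x * (x \notin S)%:R + \sum_(x <- S) phi x * (ox x)%:R / d%:R.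
Proof.
move=> [p01 _ psum].
have hs : \sum_(x <- U) phi x =
    \sum_(x <- S) phi x + \sum_(x <- U) phi x * (x \notin S)%:R.
  rewrite (eq_bigr (fun x => phi x * (x \in S)%:R + phi x * (x \notin S)%:R)); last first.
    by move=> x _; case: (x \in S) => /=; rewrite ?mulr0 ?mulr1 ?addr0 ?add0r.
  rewrite big_split /=; congr (_ + _).
  rewrite (big_sub_eq _ (L := S)) //; last by move=> x _ xS; rewrite (negbTE xS) mulr0.
  by rewrite big_seq [RHS]big_seq; apply: eq_bigr => x ->; rewrite mulr1.
have h1 : \sum_(x <- S) (ox x)%:R / d%:R - \sum_(x <- S) phi x * (ox x)%:R / d%:R
    <= (size S)%:R - \sum_(x <- S) phi x.
  rewrite -sumrB -sum1_size natr_sum -sumrB; apply: ler_sum => x _.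
  have := p01 x => /andP[p0 p1].
  have od : (ox x)%:R / d%:R <= 1 :> R.
    by rewrite ler_pdivrMr ?ltr0n // mul1r ler_nat ox_le.
  have o0 : 0 <= (ox x)%:R / d%:R :> R by rewrite divr_ge0.
  rewrite -mulrA -{1}(mul1r ((ox x)%:R / d%:R)) -mulrBl.
  by rewrite -[leRHS]mulr1 ler_wpM2l // subr_ge0.
rewrite natr_sum mulr_suml; lra.
Qed.

Let mKR x z : measurable_fun setT (fun t => K t x z). Proof. by apply: mK. Qed.
Let mKE x z : measurable_fun setT (fun t => (K t x z)%:E).
Proof. by apply/measurable_EFinP; exact: mKR. Qed.

Definition inner k t x y :=
  (\sum_(z <- x :: nb x) ((K t x z)%:E * om nb eta T k t z y))%E.

Lemma inner_ge0 k t x y : (0 <= inner k t x y)%E.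
Proof.
apply: sume_ge0 => z _.
by apply: mule_ge0; [rewrite lee_fin Kge0|exact: om_ge0].
Qed.

Lemma inner_meas k x y : measurable_fun setT (fun t => inner k t x y).
Proof.
apply: emeasurable_sum => z; apply: emeasurable_funM; first exact: mKE.
by apply: om_meas.
Qed.

Definition Fq k t (phi : V -> R) :=
  (\sum_(x <- U) ((phi x)%:E * \sum_(y <- Y) inner k t x y))%E.

Lemma Fq_ge0 k t phi : (forall x, 0 <= phi x) -> (0 <= Fq k t phi)%E.
Proof.
move=> p0; apply: sume_ge0 => x _; apply: mule_ge0; first by rewrite lee_fin.
by apply: sume_ge0 => y _; exact: inner_ge0.
Qed.

Lemma Fq_meas k phi : measurable_fun setT (fun t => Fq k t phi).
Proof.
apply: emeasurable_sum => x; apply: emeasurable_funM; first exact: measurable_cst.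
by apply: emeasurable_sum => y; exact: inner_meas.
Qed.

Lemma Aq_succ k s phi : (forall x, 0 <= phi x) ->
  Aq k.+1 s phi = (\int[@lebesgue_measure R]_(t in `[s, T]) Fq k t phi)%E.
Proof.
move=> p0; rewrite /Fq ge0_integral_sum //; last 2 first.
- move=> x; apply: emeasurable_funM; first exact: measurable_cst.
  apply: measurable_funS (_ : measurable_fun setT _) => //.
  by apply: emeasurable_sum => y; exact: inner_meas.
- move=> x t _; apply: mule_ge0; first by rewrite lee_fin.
  by apply: sume_ge0 => y _; exact: inner_ge0.
apply: eq_bigr => x _; rewrite ge0_integralZl_EFin //; last 2 first.
- by move=> t _; apply: sume_ge0 => y _; exact: inner_ge0.
- apply: measurable_funS (_ : measurable_fun setT _) => //.
  by apply: emeasurable_sum => y; exact: inner_meas.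
congr (_ * _)%E; rewrite ge0_integral_sum //.
- move=> y; apply: measurable_funS (_ : measurable_fun setT _) => //.
  exact: inner_meas.
- by move=> y t _; exact: inner_ge0.
Qed.

Lemma rearr k t phi : (forall x, 0 <= phi x) ->
  (forall x, x \in U -> phi x != 0 -> {subset x :: nb x <= U}) ->
  Fq k t phi = Aq k t (phiK t phi).
Proof.
move=> p0 psub.
have B0 z : (0 <= \sum_(y <- Y) om nb eta T k t z y)%E.
  by apply: sume_ge0 => y _; exact: om_ge0.
rewrite /Aq /phiK /Fq.
rewrite [RHS](eq_bigr (fun z => \sum_(x <- U) ((phi x * K t x z)%:E *
      \sum_(y <- Y) om nb eta T k t z y))%E); last first.
  by move=> z _; rewrite -sumEFin ge0_sume_distrl // => x _; rewrite lee_fin mulr_ge0.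
rewrite [RHS]exchange_big /= big_seq [RHS]big_seq; apply: eq_bigr => x xU.
have [->|px] := eqVneq (phi x) 0.
  by rewrite mul0e big1 // => z _; rewrite mul0r mul0e.
rewrite /inner exchange_big /=.
rewrite [X in (_ * X)%E](eq_bigr (fun z => (K t x z)%:E * \sum_(y <- Y) om nb eta T k t z y))%E;
  last by move=> z _; rewrite ge0_sume_distrr // => y _; exact: om_ge0.
rewrite -(big_sub_eq _ (U := U)) //; last 2 first.
- exact: psub.
- by move=> z _ zx; rewrite Kout // mul0e.
rewrite ge0_sume_distrr; last by move=> z _; apply: mule_ge0; rewrite ?lee_fin.
by apply: eq_bigr => z _; rewrite muleA EFinM.
Qed.

Definition c0 : R := (\sum_(x <- S) ox x)%:R / d%:R.

Lemma itv_split (s a b : R) : s <= a -> a <= b ->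
  `[s, b]%classic = `[s, a]%classic `|` `]a, b]%classic :> set R.
Proof.
move=> sa ab; apply/seteqP; split => t /=.
  rewrite in_itv /= => /andP[st tb]; have [ta|ta] := leP t a.
    by left; rewrite /= in_itv /= st ta.
  by right; rewrite /= in_itv /= ta tb.
rewrite in_itv /=.
case; rewrite /= in_itv /= => /andP[h1 h2].
  by rewrite ?in_itv /= h1 (le_trans h2 ab).
by rewrite in_itv /= h2 andbT (le_trans sa (ltW h1)).
Qed.

Lemma itv_disj (s a b : R) : [disjoint `[s, a]%classic & `]a, b]%classic].
Proof.
rewrite disj_set2E; apply/eqP/seteqP; split => // t [] /=.
by rewrite !in_itv /= => /andP[_ h1] /andP[h2 _]; lra.
Qed.

Lemma claim n : (n <= N)%N -> forall s, 0 <= s <= T - 1 -> forall phi, good (N - n) phi ->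
  ((c0 * Pn n (T - 1 - s))%:E <= \sum_(k < n.+1) Aq k s phi)%E.
Proof.
elim: n => [|n IH] nN s s01 phi g.
  rewrite /Pn big_ord0 mulr0; apply: sume_ge0 => k _; apply: Aq_ge0 => x.
  by case: g => p01 _ _; case/andP: (p01 x).
have p0 x : 0 <= phi x by case: g => p01 _ _; case/andP: (p01 x).
have eN : ((N - n.+1).+1 = N - n)%N by rewrite subnSK.
have psub x : x \in U -> phi x != 0 -> {subset x :: nb x <= U}.
  move=> _ px z zx; apply: (@Ur_mono _ nb S (N - n) N); first exact: leq_subr.
  have xr : x \in Ur nb S (N - n.+1).
    by apply: contraNT px => xr; case: g => _ /(_ x xr) -> _.
  by rewrite -eN; apply: (Ur_xnb xr).
rewrite big_ord_recl /=.
rewrite (eq_bigr (fun k : 'I_n.+1 => Aq k.+1 s phi)) //.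
under eq_bigr do rewrite Aq_succ //.
rewrite -ge0_integral_sum //; last 2 first.
- by move=> k; apply: measurable_funS (Fq_meas k phi).
- by move=> k t _; exact: Fq_ge0.
set H := fun t => (\sum_(k < n.+1) Fq k t phi)%E.
have mH : measurable_fun setT H.
  by apply: emeasurable_sum => k; exact: Fq_meas.
have H0 t : (0 <= H t)%E by apply: sume_ge0 => k _; exact: Fq_ge0.
have HE t : H t = (\sum_(k < n.+1) Aq k t (phiK t phi))%E.
  by apply: eq_bigr => k _; rewrite rearr.
case/andP: s01 => s0 sa.
rewrite (itv_split sa); last lra.
rewrite ge0_integral_setU //; last 3 first.
- exact: (measurable_funS measurableT (@subsetT _ _) mH).
- by move=> t _; exact: H0.
- exact: itv_disj.
set c1 := \sum_(x <- S) phi x * (ox x)%:R / d%:R.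
have P2 : (c1%:E <= \int[@lebesgue_measure R]_(t in `](T - 1)%R, T]) H t)%E.
  have -> : c1%:E = (\int[@lebesgue_measure R]_(t in `](T - 1)%R, T]) (cst c1%:E) t)%E.
    rewrite integral_cst // [X in (_ * X)%E]lebesgue_measure_itv /= lte_fin.
    rewrite ifT; last lra.
    by rewrite -EFinB -EFinM; congr (_%:E); ring.
  apply: ge0_le_integral => //.
  - move=> t _; rewrite /= lee_fin; apply: sumr_ge0 => x _.
    by rewrite divr_ge0 // mulr_ge0.
  - exact: (measurable_funS measurableT (@subsetT _ _) mH).
  move=> t; rewrite /= in_itv /= => /andP[t1 t2].
  rewrite HE big_ord_recl /= -[leLHS]adde0; apply: leeD.
    rewrite A0E lee_fin; apply: c1_le => //; last by apply/leq_ltn_trans: nN.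
    by rewrite t2 ltW.
  by apply: sume_ge0 => k _; apply: Aq_ge0; exact: phiK_ge0.
have P1 : ((c0 * \sum_(j < n) (T - 1 - s)%R ^+ j.+1 / (j.+1`!)%:R)%:E <=
    \int[@lebesgue_measure R]_(t in `[s, (T - 1)%R]) H t)%E.
  have [sa'|] := ltP s (T - 1); last first.
    move=> as'; have -> : s = T - 1 by apply/le_anti; rewrite sa as'.
    rewrite subrr big1 ?mulr0 ?integral_ge0 // => j _; rewrite expr0n /= mul0r //.
  have c00 : 0 <= c0 by rewrite /c0 divr_ge0.
  apply: (@le_trans _ _ (\int[@lebesgue_measure R]_(t in `[s, (T - 1)%R])
      ((c0 * Pn n (T - 1 - t))%:E))%E).
    under eq_integral do rewrite EFinM.
    rewrite ge0_integralZl_EFin //.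
    - by rewrite int_Pn // -EFinM.
    - move=> t; rewrite /= in_itv /= => /andP[_ t1].
      by rewrite lee_fin Pn_ge0 // subr_ge0.
    - exact: (measurable_funS measurableT (@subsetT _ _) (Pn_meas1 n (T - 1))).
  apply: ge0_le_integral => //.
  - move=> t; rewrite /= in_itv /= => /andP[_ t1].
    by rewrite lee_fin mulr_ge0 // Pn_ge0 // subr_ge0.
  - exact: (measurable_funS measurableT (@subsetT _ _) (Pn_meas n (T - 1) c0)).
  - exact: (measurable_funS measurableT (@subsetT _ _) mH).
  move=> t; rewrite /= in_itv /= => /andP[st t1].
  rewrite HE; apply: IH; first exact: ltnW.
    by rewrite t1 (le_trans s0 st).
  exact: phiK_good.
rewrite A0E PnS mulrDr mulr1.
set X := \sum_(j < n) (T - 1 - s) ^+ j.+1 / (j.+1`!)%:R.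
apply: (@le_trans _ _ ((\sum_(x <- U) phi x * (x \notin S)%:R + c1 + c0 * X)%:E)).
  rewrite lee_fin lerD2r; exact: (deficit g).
rewrite !EFinD -addeA leeD2l // addeC; exact: leeD.
Qed.

End Main.

Unset Implicit Arguments. Set Strict Implicit.

Lemma exists_Pn (R : realType) (a : R) (d : nat) : (1 < d)%N ->
  exists n, expR a / d%:R <= Pn n a.
Proof.
move=> d1.
have cv := is_cvg_series_exp_coeff a.
have lt : expR a / d%:R < limn (@series R^o (exp_coeff a)).
  rewrite [X in _ < X](_ : _ = expR a); last by rewrite expRE /pseries -exp_coeffE.
  rewrite ltr_pdivrMr ?ltr0n ?(ltn_trans _ d1) //.
  by rewrite ltr_pMr ?expR_gt0 // ltr1n.
have [N _ HN] := cvgr_gt _ cv _ lt.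
exists N; have := HN N (leqnn N) => /= h; apply: ltW; apply: (lt_le_trans h).
by rewrite /Pn -(big_mkord xpredT (fun j => a ^+ j / (j`!)%:R)) /series /=.
Qed.

Local Open Scope fset_scope.

Theorem mainTheorem19 (R : realType) (V : choiceType) (nb : V -> seq V) (d : nat)
  (S : {fset V}) (p mu beta : R) (eta : R -> V -> V -> bool) :
  simple_graph nb -> connected_graph nb -> transitive_graph nb ->
  regular_graph nb d -> (3 <= d)%N ->
  0 < cheeger R nb ->
  S != fset0 ->
  0 < p <= 1 -> 0 < mu <= 2^-1 ->
  (forall t x y, eta t x y = eta t y x) ->
  (forall x y, measurable [set t : R | eta t x y]) ->
  0 < beta ->
  beta * (edge_bd nb S)%:R <= (open_bd nb eta mu^-1 S)%:R ->
  (((beta / (d%:R * expR 1)) * cheeger R nb)%:E <= Phi_eta nb eta mu^-1 S)%E.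
Proof.
move=> Hs _ _ Hreg d3 ch0 S0 _ /andP[mu0 mu2] Heta Hm b0 hbeta.
have d0 : (0 < d)%N by apply: leq_trans d3.
set T := mu^-1.
have T0 : 0 < T by rewrite invr_gt0.
have muT : mu * T = 1 by rewrite mulfV // gt_eqF.
have T2 : 2 <= T by nra.
have uS : uniq (S : seq V) := fset_uniq S.
have [n hn] := @exists_Pn R (T - 1) d (ltn_trans (isT : (1 < 2)%N) d3).
have sz0 : (0 < size (S : seq V))%N by rewrite -/(size _) (cardfs_gt0 S).
set Y := [seq y <- Ur nb S n | y \notin (S : seq V)].
have uU : uniq (Ur nb S n) by apply: Ur_uniq.
have SU : {subset (S : seq V) <= Ur nb S n} by move=> x xS; apply: (@Ur_mono _ nb S 0 n).
have om0 k s x y : (0 <= om nb eta T k s x y)%E by apply: om_ge0.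
have AqE k : Aq nb eta T S n k 0 (fun x => (x \in S)%:R) =
    (\sum_(x <- S) \sum_(y <- Y) om nb eta T k 0 x y)%E.
  rewrite /Aq (big_sub_eq _ (L := S)) //; last first.
    by move=> x _ xS; rewrite (negbTE xS) mul0e.
  by rewrite big_seq [RHS]big_seq; apply: eq_bigr => x xS; rewrite xS mul1e.
have eqA : (\sum_(x <- S) \sum_(y <- Y) \sum_(k < n.+1) walk_term nb eta T k 0 x y =
    (expR (- T))%:E * \sum_(k < n.+1) Aq nb eta T S n k 0 (fun x => (x \in S)%:R))%E.
  under eq_bigr do under eq_bigr do under eq_bigr do rewrite (walk_termE T Hreg d0 Hm) subr0.
  under eq_bigr do rewrite (exchange_big _ _ (index_enum _)).
  rewrite (exchange_big _ _ (index_enum _)) /=.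
  rewrite ge0_sume_distrr; last by move=> k _; rewrite AqE; apply: sume_ge0 => x _; apply: sume_ge0.
  apply: eq_bigr => k _; rewrite AqE ge0_sume_distrr; last by move=> x _; apply: sume_ge0.
  apply: eq_bigr => x _; rewrite ge0_sume_distrr //.
have uY : uniq Y by apply: filter_uniq.
have key : ((expR (- T) * (c0 nb d eta T S * Pn n (T - 1 - 0)))%:E <=
    \sum_(x <- S) \esum_(y in [set y | y \notin S]) trans_prob nb eta T x y)%E.
  apply: (@le_trans _ _ (\sum_(x <- S) \sum_(y <- Y) \sum_(k < n.+1)
      walk_term nb eta T k 0 x y)%E); last first.
    apply: lee_sum => x _; apply: esum_ge; exists [set` Y].
      split; first exact: finite_seq.
      by move=> y /=; rewrite mem_filter => /andP[].
    rewrite -fsbig_seq //; apply: lee_sum => y _.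
    rewrite -(big_mkord xpredT (fun k => walk_term nb eta T k 0 x y)).
    apply: nneseries_lim_ge => k _ _.
    by rewrite (walk_termE T Hreg d0 Hm); apply: mule_ge0.
  rewrite eqA EFinM; apply: lee_wpmul2l => //.
  apply: (claim Hs Hreg d0 Heta Hm uS (leqnn n)); first by rewrite lexx subr_ge0; lra.
  rewrite subnn; split.
  - by move=> x; case: (x \in S); rewrite /= ?lexx ?ler01.
  - by move=> x /= /negbTE ->.
  - rewrite (big_sub_eq _ (L := S)) //; last by move=> x _ /negbTE ->.
    rewrite le_eqVlt; apply/orP; left; apply/eqP.
    rewrite -sum1_size natr_sum; apply/esym; apply: eq_big_seq => x xS.
    by rewrite xS.
have dR : 0 < d%:R :> R by rewrite ltr0n.
have zR : 0 < (size (S : seq V))%:R :> R by rewrite ltr0n.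
have hopen : (open_bd nb eta T S)%:R = c0 nb d eta T S * d%:R.
  by rewrite /c0 divfK ?gt_eqF.
have hvol : vol nb S = (size (S : seq V) * d)%N.
  rewrite /vol (eq_bigr (fun _ => d)); last by move=> x _; rewrite Hreg.
  by rewrite big_const_seq count_predT iter_addn_0 mulnC.
have hch : cheeger R nb <= (edge_bd nb S)%:R / (vol nb S)%:R.
  apply: ge_inf; last by exists S; split.
  by exists 0 => r [W [_ ->]]; rewrite divr_ge0.
have h1 : beta * cheeger R nb * ((size (S : seq V))%:R * d%:R) <= (open_bd nb eta T S)%:R.
  apply: le_trans hbeta; rewrite -mulrA; apply: ler_wpM2l; first exact: ltW.
  by rewrite -ler_pdivlMr ?mulr_gt0 // -natrM -hvol.
have hE : expR (- T) * expR (T - 1) * expR 1 = 1.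
  by rewrite -!expRD -expR0; congr expR; ring.
rewrite subr0 in key hn *.
rewrite /Phi_eta; apply: le_trans (lee_wpmul2l _ key); last by rewrite lee_fin invr_ge0 ltW.
rewrite -EFinM lee_fin.
set Ph := cheeger R nb; set c := c0 nb d eta T S; set P := Pn n (T - 1).
set z := (size (S : seq V))%:R; set D := d%:R.
have E0 : 0 < expR 1 :> R by apply: expR_gt0.
have M0 : 0 < z * D * D * expR 1 by rewrite !mulr_gt0.
rewrite -(ler_pM2r M0).
have -> : beta / (D * expR 1) * Ph * (z * D * D * expR 1) = beta * Ph * (z * D).
  by field; rewrite ?gt_eqF.
have -> : #|` S|%:R^-1 * (expR (- T) * (c * P)) * (z * D * D * expR 1) =
    (c * D) * (expR (- T) * P * D * expR 1).
  by rewrite /z; field; rewrite ?gt_eqF.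
rewrite -hopen; apply: (le_trans h1); rewrite ler_peMr //.
have : expR (T - 1) <= P * D by rewrite -ler_pdivrMr.
move=> hP; rewrite -[X in X <= _]hE -!mulrA; apply: ler_wpM2l; first exact: expR_ge0.
by rewrite mulrA; apply: ler_wpM2r; first exact: expR_ge0.
Qed.
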